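(* Let $n\ge2$, let $\mathbf{q}\in\mathbb{R}^n$ with $\sum_i\mathbf{q}_i=1$ and $\mathbf{q}\neq\mathbf{1}/n$, let $q_{\min}=\min_i\mathbf{q}_i$, and let $t\ge1/n$. Define $$\bar{\mathbf{q}}=\frac{\mathbf{1}}{n}+\frac{1}{1-n\,q_{\min}}\Big(\mathbf{q}-\frac{\mathbf{1}}{n}\Big),\qquad \bar{\mathbf{p}}=\frac{\mathbf{1}}{n}+\sqrt{t-\tfrac1n}\,\frac{\mathbf{q}-\mathbf{1}/n}{\|\mathbf{q}-\mathbf{1}/n\|_2}.$$ If $\bar{\mathbf{q}}\cdot\bar{\mathbf{q}}\ge t$, then $\bar{\mathbf{p}}\ge0$ and $\bar{\mathbf{p}}$ maximizes $\mathbf{p}\cdot\mathbf{q}$ over $P(t)$.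
   Context: $\mathbf{1}\in\mathbb{R}^n$ is the all-ones vector. $P(t)=\{\mathbf{p}\in\mathbb{R}^n:\mathbf{p}\ge0,\ \sum_i\mathbf{p}_i=1,\ \mathbf{p}\cdot\mathbf{p}\le t\}$. Inequalities between vectors are componentwise. *)

(* Defs.v *)
From mathcomp Require Import all_boot all_order all_algebra.
From mathcomp Require Import reals.
Set Implicit Arguments. Unset Strict Implicit. Unset Printing Implicit Defensive.
Import Order.TTheory GRing.Theory Num.Theory.
Local Open Scope ring_scope.

Definition dot (R : realType) (n : nat) (p q : 'I_n -> R) : R :=
  \sum_(i < n) p i * q i.

Definition norm2 (R : realType) (n : nat) (v : 'I_n -> R) : R :=
  Num.sqrt (dot v v).

(* minimum entry of q (meaningful for n >= 1) *)
Definition vmin (R : realType) (n : nat) (q : 'I_n -> R) : R :=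
  let s := [seq q i | i <- enum 'I_n] in foldr Num.min (head 0 s) s.

Definition unif (R : realType) (n : nat) : 'I_n -> R := fun _ => (n%:R)^-1.

Definition Pt (R : realType) (n : nat) (t : R) (p : 'I_n -> R) : Prop :=
  (forall i, 0 <= p i) /\ \sum_(i < n) p i = 1 /\ dot p p <= t.

Definition qbar (R : realType) (n : nat) (q : 'I_n -> R) : 'I_n -> R :=
  fun i => (n%:R)^-1 + (1 - n%:R * vmin q)^-1 * (q i - (n%:R)^-1).

Definition pbar (R : realType) (n : nat) (t : R) (q : 'I_n -> R) : 'I_n -> R :=
  fun i => (n%:R)^-1 +
    Num.sqrt (t - (n%:R)^-1) * ((q i - (n%:R)^-1) / norm2 (fun j => q j - (n%:R)^-1)).

(* Main.v *)
Require Import Defs.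
From mathcomp Require Import all_boot all_order all_algebra.
From mathcomp Require Import reals.
From mathcomp Require Import ring lra.
From Stdlib Require Import FunctionalExtensionality.
Import Order.TTheory GRing.Theory Num.Theory.
Local Open Scope ring_scope.

Lemma sum3 (R : realType) (n : nat) (a b c : R) (f g : 'I_n -> R) :
  \sum_(i < n) (a + b * f i + c * g i) =
  a * n%:R + b * \sum_(i < n) f i + c * \sum_(i < n) g i.
Proof.
by rewrite !big_split /= sumr_const card_ord mulr_natr -!mulr_sumr.
Qed.

Lemma sum4 (R : realType) (n : nat) (a b c e : R) (f g h : 'I_n -> R) :
  \sum_(i < n) (a + b * f i + c * g i + e * h i) =
  a * n%:R + b * \sum_(i < n) f i + c * \sum_(i < n) g i + e * \sum_(i < n) h i.
Proof.
by rewrite !big_split /= sumr_const card_ord mulr_natr -!mulr_sumr.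
Qed.

Lemma msq (R : realType) (x : R) : 0 <= x * x.
Proof. by rewrite -expr2 sqr_ge0. Qed.

Lemma foldr_min_le (R : realType) (s : seq R) x0 :
  (foldr Num.min x0 s <= x0) /\ (forall y, y \in s -> foldr Num.min x0 s <= y).
Proof.
elim: s => [|a s [IH1 IH2]] /=; first by split => // y.
split; first by rewrite ge_min IH1 orbT.
move=> y; rewrite inE => /orP [/eqP ->|ys]; first by rewrite ge_min lexx.
by rewrite ge_min IH2 // orbT.
Qed.

Lemma foldr_min_in (R : realType) (s : seq R) x0 :
  foldr Num.min x0 s = x0 \/ foldr Num.min x0 s \in s.
Proof.
elim: s => [|a s IH] /=; first by left.
rewrite minEle; case: ifP => _; first by right; rewrite inE eqxx.
case: IH => [->|h]; [by left | by right; rewrite inE h orbT].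
Qed.

Lemma vmin_prop (R : realType) (n : nat) (q : 'I_n -> R) : (0 < n)%N ->
  (forall i, vmin q <= q i) /\ exists i0, vmin q = q i0.
Proof.
move=> n0; rewrite /vmin /=.
set s := [seq q i | i <- enum 'I_n].
have hs : head 0 s \in s.
  rewrite /s; case: n n0 q {s} => // n' _ q.
  by rewrite enum_ordSl /= inE eqxx.
have hin : forall i, q i \in s by move=> i; apply: map_f; rewrite mem_enum.
have [_ H2] := @foldr_min_le R s (head 0 s).
split; first by move=> i; apply: H2.
have : foldr Num.min (head 0 s) s \in s by case: (@foldr_min_in R s (head 0 s)) => [->|].
by case/mapP => i _ ->; exists i.
Qed.

Theorem mainTheorem9 (R : realType) (n : nat) (q : 'I_n -> R) (t : R) :
  (2 <= n)%N ->
  \sum_(i < n) q i = 1 ->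
  q <> @unif R n ->
  (n%:R)^-1 <= t ->
  t <= dot (qbar q) (qbar q) ->
  (forall i, 0 <= pbar t q i) /\
  Pt t (pbar t q) /\
  (forall p : 'I_n -> R, Pt t p -> dot p q <= dot (pbar t q) q).
Proof.
move=> n2 sq qnu ut tq.
have n0 : (0 < n)%N by apply: leq_trans n2.
set N := n%:R : R.
have N0 : 0 < N by rewrite ltr0n.
set u := N^-1.
have u0 : 0 < u by rewrite invr_gt0.
have Nu : N * u = 1 by rewrite mulfV // gt_eqF.
have uN : u * N = 1 by rewrite mulrC.
have uuN : u * u * N = u by rewrite -mulrA uN mulr1.
set d := fun j => q j - u.
have sd : \sum_(i < n) d i = 0.
  rewrite /d big_split /= sq sumr_const card_ord mulNrn -mulr_natr.
  by rewrite -/N mulrC Nu subrr.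
set D := dot d d.
have D0 : 0 < D.
  have Dge : 0 <= D by rewrite /D /dot sumr_ge0 // => i _; exact: msq.
  rewrite lt_def Dge andbT; apply/eqP => HD.
  apply: qnu; apply: functional_extensionality => i.
  have := @psumr_eq0P R _ xpredT (fun i => d i * d i) (fun j _ => @msq R (d j)) HD i isT.
  by move/eqP; rewrite mulf_eq0 orbb /d subr_eq0 => /eqP.
have [mle [i0 mi0]] := @vmin_prop R n q n0.
set m := vmin q.
set c := 1 - N * m.
have c0 : 0 < c.
  rewrite ltNge; apply/negP => hc.
  have dge : forall j, 0 <= d j.
    move=> j; rewrite /d subr_ge0; apply: le_trans (mle j).
    have : u - m = u * c by rewrite /c mulrBr mulr1 mulrA (mulrC u) Nu mul1r.
    by move=> h; rewrite -subr_le0 h pmulr_rle0.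
  have dz := @psumr_eq0P R _ xpredT d (fun j _ => dge j) sd.
  have : D = 0 by rewrite /D /dot big1 // => j _; rewrite dz // mul0r.
  by move=> h; move: D0; rewrite h ltxx.
have dm : forall i, - (c * u) <= d i.
  move=> i; have -> : - (c * u) = m - u.
    by rewrite /c mulrBl mul1r mulrAC Nu mul1r opprB.
  by rewrite /d lerD2r.
set ci := c^-1.
have cci : c * ci = 1 by rewrite mulfV // gt_eqF.
have ci0 : 0 < ci by rewrite invr_gt0.
have qq : dot (qbar q) (qbar q) = u + ci * ci * D.
  rewrite /dot /qbar -/N -/u -/m -/c -/ci.
  rewrite (eq_bigr (fun i => u * u + (2 * u * ci) * d i + (ci * ci) * (d i * d i))); last by move=> i _; rewrite /d; ring.
  rewrite sum3 sd -/(dot d d) -/D.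
  by rewrite uuN; ring.
set s := Num.sqrt (t - u).
have s0 : 0 <= s by apply: sqrtr_ge0.
have ss : s * s = t - u by rewrite -expr2 sqr_sqrtr // subr_ge0.
set nd := Num.sqrt D.
have nd0 : 0 < nd by rewrite sqrtr_gt0.
have ndd : nd * nd = D by rewrite -expr2 sqr_sqrtr // ltW.
have snd : s <= ci * nd.
  rewrite -ler_sqr ?nnegrE //; last by rewrite mulr_ge0 // ltW.
  by rewrite exprMn !expr2 ndd ss; lra.
set k := s / nd.
have k0 : 0 <= k by rewrite divr_ge0 // ltW.
have knd : k * nd = s by rewrite /k mulfVK // gt_eqF.
have ck : c * k <= 1.
  rewrite -cci ler_pM2l // /k ler_pdivrMr //.
have pE : forall i, pbar t q i = u + k * d i.
  move=> i; rewrite /pbar /norm2 -/N -/u -/s -[Num.sqrt (dot _ _)]/nd /k /d; ring.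
have pge : forall i, 0 <= pbar t q i.
  move=> i; rewrite pE; have := dm i; nra.
have psum : \sum_(i < n) pbar t q i = 1.
  rewrite (eq_bigr (fun i => u + k * d i + 0 * d i)); last by move=> i _; rewrite pE; ring.
  by rewrite sum3 sd uN; ring.
have pdot : dot (pbar t q) (pbar t q) = t.
  rewrite /dot.
  rewrite (eq_bigr (fun i => u * u + (2 * u * k) * d i + (k * k) * (d i * d i))); last by move=> i _; rewrite pE; ring.
  rewrite sum3 sd -/(dot d d) -/D -ndd.
  rewrite (_ : k * k * (nd * nd) = (k * nd) * (k * nd)); last by ring.
  by rewrite knd ss uuN; ring.
split => //; split; first by split => //; split => //; rewrite pdot.
move=> p [hp0 [hp1 hpp]].
have qE : forall i, q i = u + d i by move=> i; rewrite /d; ring.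
have e1 : dot p q = u + dot p d.
  rewrite /dot; rewrite (eq_bigr (fun i => 0 + u * p i + 1 * (p i * d i))); last by move=> i _; rewrite qE; ring.
  by rewrite sum3 hp1; ring.
have e2 : dot (pbar t q) q = u + s * nd.
  rewrite /dot; rewrite (eq_bigr (fun i => u * u + (u + k * u) * d i + k * (d i * d i))); last by move=> i _; rewrite pE qE; ring.
  rewrite sum3 sd -/(dot d d) -/D -ndd.
  rewrite (_ : k * (nd * nd) = s * nd) ?uuN; last by rewrite -knd; ring.
  ring.
set x := fun i => p i - u.
set a := dot p d.
set X := dot x x.
have eX : X = dot p p - u.
  rewrite /X /dot; rewrite (eq_bigr (fun i => u * u + (- (2 * u)) * p i + 1 * (p i * p i))); last by move=> i _; rewrite /x; ring.
  by rewrite sum3 hp1 -/(dot p p) uuN; ring.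
have ea : dot x d = a.
  rewrite /dot; rewrite (eq_bigr (fun i => 0 + (- u) * d i + 1 * (p i * d i))); last by move=> i _; rewrite /x; ring.
  by rewrite sum3 sd /a /dot; ring.
have cs0 : 0 <= \sum_(i < n) (D * x i - a * d i) * (D * x i - a * d i).
  by apply: sumr_ge0 => i _; apply: msq.
have cs1 : \sum_(i < n) (D * x i - a * d i) * (D * x i - a * d i) = D * (D * X - a * a).
  rewrite (eq_bigr (fun i => 0 + (D * D) * (x i * x i) + (- (2 * D * a)) * (x i * d i) + (a * a) * (d i * d i))); last by move=> i _; ring.
  rewrite sum4 -/(dot x x) -/X -/(dot x d) ea -/(dot d d) -/D; ring.
have cs : a * a <= D * X.
  rewrite cs1 in cs0; rewrite -subr_ge0; rewrite pmulr_rge0 // in cs0.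
have Xs : X <= s * s by rewrite eX ss; lra.
have asn : a * a <= (s * nd) * (s * nd).
  rewrite (_ : (s * nd) * (s * nd) = D * (s * s)); last by rewrite -ndd; ring.
  apply: le_trans cs _; rewrite ler_pM2l //.
have asn' : a <= s * nd.
  have sn0 : 0 <= s * nd by rewrite mulr_ge0 // ltW.
  case: (lerP a 0) => ha; first by lra.
  by rewrite -ler_sqr ?nnegrE ?(ltW ha) // !expr2.
by rewrite e1 e2 lerD2l.
Qed.
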